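(* For an integer $n>1$ define, for every integer $1<r<n$, $$E^{BW,P}_n(r)=\frac{2r(r-1)}{n^2}\sum_{k=r+1}^{n}\frac{n+k}{(k-1)(k-2)},$$ and let $\mathcal{M}(n)$ be a value of $r$ at which $E^{BW,P}_n$ attains its maximum. Let $$\vartheta=\frac{1}{2W\!\left(\frac{e^{3/2}}{2}\right)}=0.552001\dots,$$ the solution of $1-3x-2x\log x=0$. Then (i) $\lim_{n\to\infty}\mathcal{M}(n)/n=\vartheta$; (ii) $\lim_{n\to\infty}E^{BW,P}_n(\mathcal{M}(n))=\lim_{n\to\infty}E^{BW,P}_n(\lfloor n\vartheta\rfloor)=\vartheta(1+\vartheta)=0.8567\dots$.
   Context: $W$ denotes the principal (main) branch of the Lambert $W$ function, i.e. the inverse of $z\mapsto ze^z$ on $[-1,\infty)$. *)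

(* Defs.v *)
From Stdlib Require Import Reals Lra Lia ClassicalEpsilon.
From Coquelicot Require Import Coquelicot.
Open Scope R_scope.

(* Principal branch of the Lambert W function: for y >= -1/e, the unique
   w >= -1 with w * exp w = y (chosen by definite description). *)
Definition LambertW (y : R) : R :=
  epsilon (inhabits 0) (fun w => -1 <= w /\ w * exp w = y).

Definition vartheta : R := 1 / (2 * LambertW (exp (3/2) / 2)).

Definition EBWP (n r : nat) : R :=
  2 * INR r * (INR r - 1) / (INR n ^ 2) *
  sum_n_m (fun k => (INR n + INR k) / ((INR k - 1) * (INR k - 2))) (r + 1) n.

Definition nat_floor (x : R) : nat := Z.to_nat (Int_part x).

(* M is a maximizer of E_n over 1 < r < n, for every n for which this range
   is nonempty (n >= 3). *)
Definition is_maximizer (M : nat -> nat) : Prop :=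
  forall n : nat, (2 < n)%nat ->
    (1 < M n < n)%nat /\
    (forall r : nat, (1 < r < n)%nat -> EBWP n r <= EBWP n (M n)).

(* Main.v *)
Require Import Defs.
From Stdlib Require Import Reals Lra Lia ZArith ClassicalEpsilon.
From Coquelicot Require Import Coquelicot.
Open Scope R_scope.

Lemma plusR (a b : R) : @plus R_AbelianMonoid a b = Rplus a b. Proof. reflexivity. Qed.
Lemma zeroR : @zero R_AbelianMonoid = 0. Proof. reflexivity. Qed.

Lemma ln_le_xm1 x : 0 < x -> ln x <= x - 1.
Proof. intros Hx. generalize (exp_ineq1_le (ln x)). rewrite exp_ln; lra. Qed.

Lemma ln_diff_le a b : 0 < b -> b <= a -> ln a - ln b <= (a - b) / b.
Proof.
  intros Hb Hab.
  assert (Ha : 0 < a) by lra.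
  replace (ln a) with (ln (b * (a / b))).
  2:{ f_equal. field. lra. }
  rewrite ln_mult; [| lra | apply Rdiv_lt_0_compat; lra].
  generalize (ln_le_xm1 (a / b) (Rdiv_lt_0_compat _ _ Ha Hb)).
  replace ((a - b) / b) with (a / b - 1) by (field; lra). lra.
Qed.

Lemma sum_decomp (N : R) r d : (2 <= r)%nat ->
  sum_n_m (fun k => (N + INR k) / ((INR k - 1) * (INR k - 2))) (r + 1) (r + d) =
  (N + 1) * (1 / (INR r - 1) - 1 / (INR (r + d) - 1)) +
  sum_n_m (fun k => 1 / (INR k - 2)) (r + 1) (r + d).
Proof.
  intros Hr. assert (HR : 2 <= INR r) by (apply (le_INR 2); lia).
  induction d as [|d IH].
  - rewrite !sum_n_m_zero; try lia. rewrite Nat.add_0_r. simpl. rewrite zeroR. ring.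
  - replace (r + S d)%nat with (S (r + d)) by lia.
    rewrite !sum_n_Sm; try lia. rewrite IH. rewrite !plusR.
    rewrite S_INR, plus_INR. rewrite plus_INR in IH.
    assert (0 <= INR d) by apply pos_INR.
    match goal with |- ?a = ?b => change (@eq R a b) end. generalize (sum_n_m (fun k : nat => 1 / (INR k - 2)) (r + 1) (r + d)); intro s. unfold plus. simpl AbelianMonoid.plus. field. repeat split; lra.
Qed.

Definition Ssum r m := sum_n_m (fun k => 1 / (INR k - 2)) (r + 1) m.

Lemma S_lower r d : (2 <= r)%nat ->
  ln (INR (r + d) - 1) - ln (INR r - 1) <= Ssum r (r + d).
Proof.
  intros Hr. assert (HR : 2 <= INR r) by (apply (le_INR 2); lia).
  unfold Ssum. induction d as [|d IH].
  - rewrite sum_n_m_zero; try lia. rewrite Nat.add_0_r. rewrite zeroR. lra.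
  - replace (r + S d)%nat with (S (r + d)) by lia.
    rewrite sum_n_Sm; try lia. rewrite !plusR.
    rewrite S_INR. rewrite plus_INR in *.
    assert (0 <= INR d) by apply pos_INR.
    generalize (ln_diff_le (INR r + INR d + 1 - 1) (INR r + INR d - 1)).
    intros H1. 
    replace (INR r + INR d + 1 - 2) with (INR r + INR d - 1) by ring.
    assert (ln (INR r + INR d + 1 - 1) - ln (INR r + INR d - 1) <= 1 / (INR r + INR d - 1)).
    { replace (1 / (INR r + INR d - 1)) with ((INR r + INR d + 1 - 1 - (INR r + INR d - 1)) / (INR r + INR d - 1)) by (field; lra).
      apply H1; lra. }
    lra.
Qed.

Lemma S_upper r d : (2 <= r)%nat ->
  Ssum r (r + 1 + d) <= 1 / (INR r - 1) + (ln (INR (r + 1 + d) - 2) - ln (INR r - 1)).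
Proof.
  intros Hr. assert (HR : 2 <= INR r) by (apply (le_INR 2); lia).
  unfold Ssum. induction d as [|d IH].
  - rewrite Nat.add_0_r, sum_n_n. rewrite plus_INR. simpl.
    replace (INR r + 1 - 2) with (INR r - 1) by ring. lra.
  - replace (r + 1 + S d)%nat with (S (r + 1 + d)) by lia.
    rewrite sum_n_Sm; try lia. rewrite !plusR.
    rewrite S_INR. rewrite !plus_INR in *. simpl in *.
    assert (0 <= INR d) by apply pos_INR.
    replace (INR r + 1 + INR d + 1 - 2) with (INR r + INR d) by ring.
    replace (INR r + 1 + INR d - 2) with (INR r + INR d - 1) in * by ring.
    assert (1 / (INR r + INR d) <= ln (INR r + INR d) - ln (INR r + INR d - 1)).
    { generalize (ln_diff_le (INR r + INR d) (INR r + INR d - 1)). intros H1.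
      generalize (ln_diff_le (INR r + INR d - 1) (INR r + INR d)). intros H2.
      clear H1 H2.
      assert (Hp : 0 < (INR r + INR d - 1) / (INR r + INR d)) by (apply Rdiv_lt_0_compat; lra).
      generalize (ln_le_xm1 _ Hp). rewrite ln_div by lra.
      replace ((INR r + INR d - 1) / (INR r + INR d) - 1) with (- (1 / (INR r + INR d))) by (field; lra).
      lra. }
    lra.
Qed.
Lemma div_le a b c d : 0 < b -> 0 < d -> a * d <= c * b -> a / b <= c / d.
Proof.
  intros Hb Hd H.
  assert (a / b - c / d = (a * d - c * b) * / (b * d)) by (field; lra).
  assert (0 < / (b * d)) by (apply Rinv_0_lt_compat; nra).
  assert ((a * d - c * b) * / (b * d) <= 0) by nra. lra.
Qed.

Lemma approx_real nn rr S L : 2 <= rr -> rr + 1 <= nn ->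
  - (1 / (nn - 1)) <= S - L <= 2 / (rr - 1) -> 0 <= L <= (nn - rr) / rr ->
  Rabs (2 * rr * (rr - 1) / nn ^ 2 * ((nn + 1) * (1 / (rr - 1) - 1 / (nn - 1)) + S)
        - (2 * (rr / nn) - 2 * (rr / nn) ^ 2 - 2 * (rr / nn) ^ 2 * (- L))) <= 10 / (nn - 1).
Proof.
  intros H1 H2 [He1 He2] [HL1 HL2].
  set (e := S - L) in *.
  replace S with (L + e) by (unfold e; ring).
  replace (2 * rr * (rr - 1) / nn ^ 2 * ((nn + 1) * (1 / (rr - 1) - 1 / (nn - 1)) + (L + e))
        - (2 * (rr / nn) - 2 * (rr / nn) ^ 2 - 2 * (rr / nn) ^ 2 * (- L)))
    with (2 * rr / nn ^ 2 + 2 * rr * (nn + 1 - 2 * rr) / (nn ^ 2 * (nn - 1))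
          + 2 * rr * (rr - 1) / nn ^ 2 * e - 2 * rr / nn ^ 2 * L)
    by (field; lra).
  
  set (A2 := 2 * rr * (nn + 1 - 2 * rr) / (nn ^ 2 * (nn - 1))).
  set (B := 2 * rr * (rr - 1) / nn ^ 2).
  set (C := 2 * rr / nn ^ 2) in *.

  assert (Hn : 0 < nn - 1) by lra.
  set (u := 1 / (nn - 1)) in *.
  assert (Hu : 0 < u) by (unfold u; apply Rdiv_lt_0_compat; lra).
  assert (HA1 : 0 <= C <= 2 * u).
  { unfold C, u. split. apply Rmult_le_pos; [lra| left; apply Rinv_0_lt_compat; nra].
    replace (2 * (1 / (nn - 1))) with (2 / (nn - 1)) by (field; lra).
    apply div_le; nra. }
  assert (HA2 : - (2 * u) <= A2 <= 2 * u).
  { unfold A2, u. replace (2 * (1 / (nn - 1))) with (2 / (nn - 1)) by (field; lra).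
    split.
    - replace (- (2 / (nn - 1))) with ((-2) / (nn - 1)) by (field; lra).
      apply div_le; try nra.
      assert (rr * (nn + 1 - 2 * rr) >= - nn ^ 2) by nra.
      assert ((rr * (nn + 1 - 2 * rr) + nn ^ 2) * (nn - 1) >= 0) by nra. nra.
    - apply div_le; try nra. }
  assert (HB : 0 <= B <= 2).
  { unfold B. split. apply Rmult_le_pos; [nra| left; apply Rinv_0_lt_compat; nra].
    replace 2 with (2 / 1) at 2 by field. apply div_le; nra. }
  assert (HBe1 : B * e <= 4 * u).
  { assert (B * e <= B * (2 / (rr - 1))) by (apply Rmult_le_compat_l; lra).
    assert (B * (2 / (rr - 1)) = 4 * rr / nn ^ 2) by (unfold B; field; lra).
    assert (4 * rr / nn ^ 2 <= 4 * u).
    { unfold u. replace (4 * (1 / (nn - 1))) with (4 / (nn - 1)) by (field; lra).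
      apply div_le; nra. }
    lra. }
  assert (HBe2 : - (2 * u) <= B * e).
  { assert (B * (- u) <= B * e) by (apply Rmult_le_compat_l; lra). nra. }
  assert (HC : 0 <= C * L <= 2 * u).
  { assert (0 <= C) by (unfold C; apply Rmult_le_pos; [lra| left; apply Rinv_0_lt_compat; nra]).
    split. nra.
    assert (C * L <= C * ((nn - rr) / rr)) by (apply Rmult_le_compat_l; lra).
    assert (C * ((nn - rr) / rr) = 2 * (nn - rr) / nn ^ 2) by (unfold C; field; lra).
    assert (2 * (nn - rr) / nn ^ 2 <= 2 * u).
    { unfold u. replace (2 * (1 / (nn - 1))) with (2 / (nn - 1)) by (field; lra).
      apply div_le; nra. }
    lra. }
  replace (10 / (nn - 1)) with (10 * u) by (unfold u; field; lra).
  apply Rabs_le. lra.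
Qed.

Definition fth (x : R) : R := 2 * x - 2 * x ^ 2 - 2 * x ^ 2 * ln x.

Lemma approx n r : (2 <= r)%nat -> (r < n)%nat ->
  Rabs (EBWP n r - fth (INR r / INR n)) <= 10 / (INR n - 1).
Proof.
  intros Hr Hrn.
  assert (HR : 2 <= INR r) by (apply (le_INR 2); lia).
  assert (HN : INR r + 1 <= INR n).
  { rewrite <- S_INR. apply le_INR. lia. }
  assert (Hsum : sum_n_m (fun k => (INR n + INR k) / ((INR k - 1) * (INR k - 2))) (r + 1) n =
     (INR n + 1) * (1 / (INR r - 1) - 1 / (INR n - 1)) + Ssum r n).
  { pose proof (sum_decomp (INR n) r (n - r) Hr) as H.
    replace (r + (n - r))%nat with n in H by lia. exact H. }
  assert (Hlo : ln (INR n - 1) - ln (INR r - 1) <= Ssum r n).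
  { pose proof (S_lower r (n - r) Hr) as H.
    replace (r + (n - r))%nat with n in H by lia. exact H. }
  assert (Hhi : Ssum r n <= 1 / (INR r - 1) + (ln (INR n - 2) - ln (INR r - 1))).
  { pose proof (S_upper r (n - r - 1) Hr) as H.
    replace (r + 1 + (n - r - 1))%nat with n in H by lia. exact H. }
  unfold EBWP. rewrite Hsum.
  unfold fth. rewrite ln_div by lra.
  set (nn := INR n) in *. set (rr := INR r) in *.
  replace (ln rr - ln nn) with (- (ln nn - ln rr)) by ring.
  apply approx_real; try lra.
  - assert (ln nn - ln (nn - 1) <= (nn - (nn - 1)) / (nn - 1)) by (apply ln_diff_le; lra).
    assert (ln (rr - 1) <= ln rr) by (apply ln_le; lra).
    replace ((nn - (nn - 1)) / (nn - 1)) with (1 / (nn - 1)) in * by (field; lra).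
    split; [lra|].
    assert (ln rr - ln (rr - 1) <= (rr - (rr - 1)) / (rr - 1)) by (apply ln_diff_le; lra).
    assert (ln (nn - 2) <= ln nn) by (apply ln_le; lra).
    replace ((rr - (rr - 1)) / (rr - 1)) with (1 / (rr - 1)) in * by (field; lra).
    replace (2 / (rr - 1)) with (1 / (rr - 1) + 1 / (rr - 1)) by (field; lra).
    lra.
  - split.
    + assert (ln rr <= ln nn) by (apply ln_le; lra). lra.
    + apply ln_diff_le; lra.
Qed.

Lemma theta_spec : 0 < vartheta < 1 /\ 1 / vartheta - 3 - 2 * ln vartheta = 0.
Proof.
  set (y := exp (3/2) / 2).
  assert (Hy : 0 < y) by (unfold y; generalize (exp_pos (3/2)); lra).
  assert (Hex : exists w, -1 <= w /\ w * exp w = y).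
  { assert (Hc : continuity (fun w => w * exp w - y)) by reg.
    assert (H2 : exp (3/2) < exp 2) by (apply exp_increasing; lra).
    assert (H1 : 1 < exp 2) by (rewrite <- exp_0; apply exp_increasing; lra).
    destruct (IVT (fun w => w * exp w - y) 0 2 Hc) as [w [Hw1 Hw2]].
    - lra.
    - rewrite exp_0. lra.
    - unfold y. lra.
    - exists w. split; lra. }
  pose proof (epsilon_spec (inhabits 0) (fun w => -1 <= w /\ w * exp w = y) Hex) as [Hw1 Hw2].
  unfold vartheta, LambertW. fold y.
  set (w := epsilon (inhabits 0) (fun w => -1 <= w /\ w * exp w = y)) in *.
  assert (Hwp : 0 < w).
  { destruct (Rle_or_lt w 0) as [H|H]; [|exact H].
    assert (w * exp w <= 0) by (generalize (exp_pos w); nra). lra. }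
  assert (Hwh : 1/2 < w).
  { destruct (Rle_or_lt w (1/2)) as [H|H]; [|exact H].
    assert (exp w <= exp (1/2)) by (destruct H as [H|H]; [left; apply exp_increasing; exact H| rewrite H; lra]).
    assert (exp (1/2) < exp (3/2)) by (apply exp_increasing; lra).
    assert (w * exp w <= 1/2 * exp (1/2)) by (generalize (exp_pos w); nra).
    unfold y in Hw2. lra. }
  split.
  - split.
    + apply Rdiv_lt_0_compat; lra.
    + replace 1 with (1 / 1) at 2 by field. apply Rmult_lt_reg_r with (2 * w); [lra|].
      field_simplify; lra.
  - assert (Hln : ln w + w = 3/2 - ln 2).
    { rewrite <- (ln_exp w) at 2. rewrite <- ln_mult by (try apply exp_pos; lra).
      rewrite Hw2. unfold y. rewrite ln_div by (try apply exp_pos; lra). rewrite ln_exp. ring. }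
    rewrite ln_div by lra. rewrite ln_mult by lra. rewrite ln_1.
    replace (1 / (1 / (2 * w))) with (2 * w) by (field; lra).
    lra.
Qed.

Definition dfth (x : R) : R := 2 - 6 * x - 4 * x * ln x.

Lemma fth_deriv x : 0 < x -> derivable_pt_lim fth x (dfth x).
Proof.
  intros Hx. apply is_derive_Reals. unfold fth, dfth.
  auto_derive; [exact Hx|]. field. lra.
Qed.

Lemma dfth_eq x : 0 < x -> dfth x = 2 * x * (1 / x - 3 - 2 * ln x).
Proof. intros Hx. unfold dfth. field. lra. Qed.

Lemma fth_incr a b : 0 < a -> a < b -> b <= vartheta -> fth a < fth b.
Proof.
  intros Ha Hab Hb. destruct theta_spec as [[Ht0 Ht1] Hh].
  destruct (MVT_cor2 fth dfth a b Hab) as [c [Hc1 Hc2]].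
  { intros c Hc. apply fth_deriv. lra. }
  assert (Hc0 : 0 < c) by lra.
  assert (dfth c > 0).
  { rewrite dfth_eq by lra.
    assert (ln c < ln vartheta) by (apply ln_increasing; lra).
    assert (1 / vartheta < 1 / c).
    { apply Rmult_lt_reg_r with (c * vartheta); [nra|].
      field_simplify; lra. }
    assert (0 < 1 / c - 3 - 2 * ln c) by lra. nra. }
  nra.
Qed.

Lemma fth_decr a b : vartheta <= a -> a < b -> fth b < fth a.
Proof.
  intros Ha Hab. destruct theta_spec as [[Ht0 Ht1] Hh].
  destruct (MVT_cor2 fth dfth a b Hab) as [c [Hc1 Hc2]].
  { intros c Hc. apply fth_deriv. lra. }
  assert (Hc0 : 0 < c) by lra.
  assert (dfth c < 0).
  { rewrite dfth_eq by lra.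
    assert (ln vartheta < ln c) by (apply ln_increasing; lra).
    assert (1 / c < 1 / vartheta).
    { apply Rmult_lt_reg_r with (c * vartheta); [nra|].
      field_simplify; lra. }
    assert (1 / c - 3 - 2 * ln c < 0) by lra. nra. }
  nra.
Qed.

Lemma fth_max x : 0 < x -> fth x <= fth vartheta.
Proof.
  intros Hx. destruct theta_spec as [[Ht0 Ht1] Hh].
  destruct (Rtotal_order x vartheta) as [H|[H|H]].
  - left. apply fth_incr; lra.
  - rewrite H; lra.
  - left. apply fth_decr; lra.
Qed.

Lemma fth_theta : fth vartheta = vartheta * (1 + vartheta).
Proof.
  destruct theta_spec as [[Ht0 Ht1] Hh].
  assert (ln vartheta = (1 / vartheta - 3) / 2) by lra.
  unfold fth. rewrite H. field. lra.
Qed.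

Lemma fth_cont : continuity_pt fth vartheta.
Proof.
  destruct theta_spec as [[Ht0 Ht1] Hh].
  apply derivable_continuous_pt. exists (dfth vartheta). apply fth_deriv. exact Ht0.
Qed.

Lemma inv_lim : is_lim_seq (fun n => / INR n) 0.
Proof.
  replace (Finite 0) with (Rbar_inv p_infty) by reflexivity.
  apply is_lim_seq_inv; [apply is_lim_seq_INR | discriminate].
Qed.

Lemma eps_lim : is_lim_seq (fun n => 10 / (INR n - 1)) 0.
Proof.
  assert (H : is_lim_seq (fun n => INR n + (-1)) p_infty).
  { eapply is_lim_seq_plus; [apply is_lim_seq_INR | apply is_lim_seq_const | reflexivity]. }
  assert (H2 : is_lim_seq (fun n => / (INR n + (-1))) 0).
  { replace (Finite 0) with (Rbar_inv p_infty) by reflexivity.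
    apply is_lim_seq_inv; [exact H | discriminate]. }
  assert (H3 := is_lim_seq_scal_l _ 10 _ H2). simpl in H3.
  rewrite Rmult_0_r in H3.
  eapply is_lim_seq_ext; [|exact H3]. intros n. simpl. unfold Rdiv, Rminus. reflexivity.
Qed.

Lemma ev_big (A : R) : eventually (fun n => A < INR n).
Proof.
  pose proof is_lim_seq_INR as H. apply is_lim_seq_spec in H. exact (H A).
Qed.

Lemma floor_bounds x : 0 <= x -> x - 1 < INR (nat_floor x) <= x.
Proof.
  intros Hx. unfold nat_floor. destruct (base_Int_part x) as [H1 H2].
  assert (Hz : (0 <= Int_part x)%Z).
  { apply Z.lt_succ_r. apply lt_IZR. rewrite succ_IZR. simpl. lra. }
  rewrite INR_IZR_INZ, Z2Nat.id by exact Hz. lra.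
Qed.

Theorem theorem4 :
  forall M : nat -> nat, is_maximizer M ->
    is_lim_seq (fun n => INR (M n) / INR n) vartheta /\
    is_lim_seq (fun n => EBWP n (M n)) (vartheta * (1 + vartheta)) /\
    is_lim_seq (fun n => EBWP n (nat_floor (INR n * vartheta)))
               (vartheta * (1 + vartheta)).
Proof.
  intros M HM. destruct theta_spec as [[Ht0 Ht1] Hh].
  set (fl := fun n => nat_floor (INR n * vartheta)).
  set (eps := fun n => 10 / (INR n - 1)).
  assert (Hfl : eventually (fun n => (2 <= fl n)%nat /\ (fl n < n)%nat /\ (2 < n)%nat)).
  { destruct (ev_big (3 / vartheta + 3)) as [N HN]. exists N. intros n Hn.
    specialize (HN n Hn).
    assert (H3 : 3 / vartheta * vartheta = 3) by (field; lra).
    assert (Hnt : 3 < INR n * vartheta) by nra.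
    destruct (floor_bounds (INR n * vartheta)) as [F1 F2]; [lra|].
    fold (fl n) in F1, F2.
    split; [|split].
    - apply INR_le. simpl. lra.
    - apply INR_lt. nra.
    - apply INR_lt. simpl. assert (0 < 3 / vartheta) by (apply Rdiv_lt_0_compat; lra). lra. }
  assert (Hflim : is_lim_seq (fun n => INR (fl n) / INR n) vartheta).
  { assert (Hl : is_lim_seq (fun n => vartheta - / INR n) (vartheta - 0)).
    { apply is_lim_seq_minus'; [apply is_lim_seq_const | apply inv_lim]. }
    rewrite Rminus_0_r in Hl.
    apply is_lim_seq_le_le_loc with (fun n => vartheta - / INR n) (fun _ => vartheta);
      [| exact Hl | apply is_lim_seq_const].
    exists 1%nat. intros n Hn.
    assert (Hn0 : 0 < INR n) by (apply lt_0_INR; lia).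
    destruct (floor_bounds (INR n * vartheta)) as [F1 F2]; [nra|].
    fold (fl n) in F1, F2.
    split.
    - replace (vartheta - / INR n) with ((INR n * vartheta - 1) / INR n) by (field; lra).
      apply div_le; nra.
    - apply Rle_trans with (INR n * vartheta / INR n); [apply div_le; nra | right; field; lra]. }
  assert (Hff : is_lim_seq (fun n => fth (INR (fl n) / INR n)) (fth vartheta)).
  { apply is_lim_seq_continuous; [apply fth_cont | exact Hflim]. }
  assert (Hup : is_lim_seq (fun n => fth (INR (fl n) / INR n) + eps n) (fth vartheta + 0)).
  { apply is_lim_seq_plus'; [exact Hff | apply eps_lim]. }
  assert (Hlo : is_lim_seq (fun n => fth (INR (fl n) / INR n) - eps n) (fth vartheta - 0)).
  { apply is_lim_seq_minus'; [exact Hff | apply eps_lim]. }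
  rewrite Rplus_0_r in Hup. rewrite Rminus_0_r in Hlo.
  assert (H3 : is_lim_seq (fun n => EBWP n (fl n)) (fth vartheta)).
  { apply is_lim_seq_le_le_loc with (fun n => fth (INR (fl n) / INR n) - eps n) (fun n => fth (INR (fl n) / INR n) + eps n); [| exact Hlo | exact Hup].
    destruct Hfl as [N HN]. exists N. intros n Hn.
    destruct (HN n Hn) as [A [B C]].
    apply Rabs_le_between'. apply approx; assumption. }
  assert (Hcst : is_lim_seq (fun n => fth vartheta + eps n) (fth vartheta + 0)).
  { apply is_lim_seq_plus'; [apply is_lim_seq_const | apply eps_lim]. }
  rewrite Rplus_0_r in Hcst.
  assert (H2 : is_lim_seq (fun n => EBWP n (M n)) (fth vartheta)).
  { apply is_lim_seq_le_le_loc with (fun n => EBWP n (fl n)) (fun n => fth vartheta + eps n);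
      [| exact H3 | exact Hcst].
    destruct Hfl as [N HN]. exists N. intros n Hn.
    destruct (HN n Hn) as [A [B C]].
    destruct (HM n C) as [[M1 M2] Mmax].
    split.
    - apply Mmax. lia.
    - assert (Happ := approx n (M n) ltac:(lia) M2).
      apply Rabs_le_between' in Happ.
      assert (0 < INR (M n) / INR n).
      { apply Rdiv_lt_0_compat; apply lt_0_INR; lia. }
      assert (fth (INR (M n) / INR n) <= fth vartheta) by (apply fth_max; lra).
      unfold eps. lra. }
  rewrite fth_theta in H2, H3.
  split; [| split; [exact H2 | exact H3]].
  rewrite fth_theta in Hcst.
  apply is_lim_seq_spec. intros e.
  set (e' := Rmin e (vartheta / 2)).
  assert (He' : 0 < e') by (unfold e'; apply Rmin_case; [apply cond_pos | lra]).
  assert (He'1 : e' <= e) by apply Rmin_l.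
  assert (He'2 : e' <= vartheta / 2) by apply Rmin_r.
  assert (D1 : fth (vartheta - e') < fth vartheta) by (apply fth_incr; lra).
  assert (D2 : fth (vartheta + e') < fth vartheta) by (apply fth_decr; lra).
  set (d := Rmin (fth vartheta - fth (vartheta - e')) (fth vartheta - fth (vartheta + e'))).
  assert (Hd : 0 < d) by (unfold d; apply Rmin_case; lra).
  assert (Hd1 : d <= fth vartheta - fth (vartheta - e')) by apply Rmin_l.
  assert (Hd2 : d <= fth vartheta - fth (vartheta + e')) by apply Rmin_r.
  rewrite <- fth_theta in H2.
  apply is_lim_seq_spec in H2. destruct (H2 (mkposreal (d / 2) ltac:(lra))) as [N1 HN1].
  pose proof eps_lim as HE. apply is_lim_seq_spec in HE.
  destruct (HE (mkposreal (d / 2) ltac:(lra))) as [N2 HN2].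
  destruct Hfl as [N3 HN3].
  exists (N1 + N2 + N3)%nat. intros n Hn.
  specialize (HN1 n ltac:(lia)). specialize (HN2 n ltac:(lia)).
  destruct (HN3 n ltac:(lia)) as [A [B C]]. simpl in HN1, HN2.
  destruct (HM n C) as [[M1 M2] Mmax].
  assert (Happ := approx n (M n) ltac:(lia) M2).
  apply Rabs_le_between' in Happ.
  set (x := INR (M n) / INR n) in *.
  assert (Hx0 : 0 < x).
  { apply Rdiv_lt_0_compat; apply lt_0_INR; lia. }
  apply Rabs_lt_between in HN1. apply Rabs_lt_between in HN2.
  rewrite Rminus_0_r in HN2.
  assert (Hfx : fth vartheta - d < fth x) by lra.
  apply Rabs_lt_between. split.
  - destruct (Rlt_or_le (- e') (x - vartheta)) as [H|H]; [lra|].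
    exfalso.
    assert (fth x <= fth (vartheta - e')).
    { destruct (Rle_lt_or_eq_dec x (vartheta - e')) as [H'|H']; [lra| |].
      - left. apply fth_incr; lra.
      - rewrite H'. lra. }
    lra.
  - destruct (Rlt_or_le (x - vartheta) e') as [H|H]; [lra|].
    exfalso.
    assert (fth x <= fth (vartheta + e')).
    { destruct (Rle_lt_or_eq_dec (vartheta + e') x) as [H'|H']; [lra| |].
      - left. apply fth_decr; lra.
      - rewrite H'. lra. }
    lra.
Qed.
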